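(* Let $p\ge1$, $\phi_1,\dots,\phi_p:\mathbb Z\to\mathbb C$ and integers $t>s$. Then $F_{t,s}=\Gamma_t\Gamma_{t-1}\cdots\Gamma_{s+1}$ is the $p\times p$ matrix whose $(i,m)$ entry is $\xi^{(m)}_{t-i+1,s}$, for $1\le i,m\le p$.
   Context: $\Gamma_t$ is the $p\times p$ companion matrix with first row $(\phi_1(t),\dots,\phi_p(t))$, entries $(i,i-1)$ equal to $1$ for $2\le i\le p$, and all other entries $0$. Convention: $\phi_l(t)=0$ for $l>p$. For integers $t>s$ and $1\le m\le p$, $\Phi^{(m)}_{t,s}$ is the $(t-s)\times(t-s)$ lower Hessenberg matrix whose $(i,j)$ entry is: $\phi_{m+i-1}(s+i)$ if $j=1$; $-1$ if $j=i+1$; $\phi_{i-j+1}(s+i)$ if $2\le j\le i$; $0$ if $j>i+1$. For $t\ge s-p+1$: $\xi^{(m)}_{t,s}=\det\Phi^{(m)}_{t,s}$ if $t>s$; $\xi^{(m)}_{t,s}=1$ if $t=s-m+1$; $\xi^{(m)}_{t,s}=0$ if $s-p+1\le t\le s$, $t\ne s-m+1$. *)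

(* Defs.v *)
From mathcomp Require Import all_boot all_order all_algebra.
Set Implicit Arguments. Unset Strict Implicit. Unset Printing Implicit Defensive.
Import Order.TTheory GRing.Theory Num.Theory.
Local Open Scope ring_scope.

Section Defs.
Variables (R : comRingType) (p : nat) (phi : 'I_p -> int -> R).

(* phiE l t = phi_l(t) with the paper's 1-based index l; phi_l = 0 for l > p
   (and, harmlessly, for l = 0, which never occurs). phi_{k+1} is [phi k]. *)
Definition phiE (l : nat) (t : int) : R :=
  if l is l'.+1 then
    (if (insub l' : option 'I_p) is Some k then phi k t else 0)
  else 0.

Definition Gamma (t : int) : 'M[R]_p :=
  \matrix_(i < p, j < p)
    if (i == 0 :> nat) then phiE j.+1 t
    else if (i == j.+1 :> nat) then 1 else 0.

(* F_{s+n,s} = Gamma_{s+n} Gamma_{s+n-1} ... Gamma_{s+1}  (identity for n = 0). *)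
Fixpoint Fprod (s : int) (n : nat) : 'M[R]_p :=
  match n with
  | 0 => 1%:M
  | n'.+1 => Gamma (s + n'.+1%:Z) *m Fprod s n'
  end.

(* Phi^{(m)}_{s+n,s}, an n x n lower Hessenberg matrix (0-based indices:
   paper's (i,j) is (i'+1, j'+1)). *)
Definition PhiM (m n : nat) (s : int) : 'M[R]_n :=
  \matrix_(i < n, j < n)
    if (j == 0 :> nat) then phiE (m + i) (s + i.+1%:Z)
    else if (j == i.+1 :> nat) then -1
    else if (j <= i)%N then phiE (i - j).+1 (s + i.+1%:Z)
    else 0.

(* xi^{(m)}_{t,s}; only meaningful for t >= s - p + 1 (value 0 below that range
   is an arbitrary convention, never used in the statement). *)
Definition xi (m : nat) (t s : int) : R :=
  if s < t then \det (PhiM m `|t - s|%N s)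
  else if t == s - m%:Z + 1 then 1 else 0.

End Defs.

(* Main.v *)
Require Import Defs.
From mathcomp Require Import all_boot all_order all_algebra.
From mathcomp Require Import all_boot all_order all_algebra zify.
Import Order.TTheory GRing.Theory Num.Theory.
Local Open Scope ring_scope.

Lemma hess_det (R : comRingType) (n : nat) (f : nat -> nat -> R) :
  (forall i, (i < n)%N -> f i i.+1 = -1) ->
  (forall i j, (i < n.+1)%N -> (j < n.+1)%N -> (i.+1 < j)%N -> f i j = 0) ->
  \det (\matrix_(i < n.+1, j < n.+1) f i j) =
  \sum_(j < n.+1) f n j * \det (\matrix_(i < j, k < j) f i k).
Proof.
elim: n f => [|n IH] f H1 H0.
  by rewrite big_ord1 det_mx11 det_mx00 mxE mulr1.
rewrite (expand_det_col _ ord_max) big_ord_recr /= big_ord_recr /= big1 ?add0r; last first.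
  move=> i _; rewrite mxE H0 ?mul0r //= ?ltnS; first exact: leq_trans (ltn_ord i) (leqW (leqnSn n)).
  exact: ltn_ord.
rewrite big_ord_recr /=.
have E1 : row' ord_max (col' ord_max (\matrix_(i < n.+2, j < n.+2) f i j))
   = \matrix_(i < n.+1, j < n.+1) f i j.
  apply/matrixP=> i j; rewrite !mxE /= /bump.
  by rewrite !ltnNge !leq_ord.
rewrite /cofactor E1.
pose g := fun i j => f (bump n i) j.
have E2 : row' (widen_ord (leqnSn _) ord_max) (col' ord_max (\matrix_(i < n.+2, j < n.+2) f i j))
   = \matrix_(i < n.+1, j < n.+1) g i j.
  apply/matrixP=> i j; rewrite !mxE /= /g /bump.
  by rewrite [(n.+1 <= j)%N]leqNgt ltn_ord.
have G1 : forall i, (i < n)%N -> g i i.+1 = -1.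
  move=> i Hi; rewrite /g /bump leqNgt Hi add0n H1 //; lia.
have G0 : forall i j, (i < n.+1)%N -> (j < n.+1)%N -> (i.+1 < j)%N -> g i j = 0.
  move=> i j Hi Hj Hij; rewrite /g /bump; case: leqP => Hn.
    have -> : i = n by lia.
    lia.
  rewrite add0n H0 //; lia.
rewrite E2 (IH g G1 G0).
rewrite !mxE /= H1 //.
have -> : (-1 : R) ^+ (n + n.+1) = -1.
  by rewrite -signr_odd addnS /= addnn odd_double.
have -> : (-1 : R) ^+ (n.+1 + n.+1) = 1.
  by rewrite -signr_odd addnn odd_double.
rewrite !mulN1r opprK !mul1r; congr (_ + _).
apply: eq_bigr => j _; rewrite /g /bump leqnn add1n; congr (_ * _).
congr (\det _); apply/matrixP=> i k; rewrite !mxE.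
have : (i < n)%N by have := ltn_ord i; have := ltn_ord j; lia.
by move=> Hi; rewrite leqNgt Hi add0n.
Qed.

Set Implicit Arguments. Unset Strict Implicit.
Definition fP (R : comRingType) (p : nat) (phi : 'I_p -> int -> R) (m : nat) (s : int) (i j : nat) : R :=
    if (j == 0 :> nat) then phiE phi (m + i) (s + i.+1%:Z)
    else if (j == i.+1 :> nat) then -1
    else if (j <= i)%N then phiE phi (i - j).+1 (s + i.+1%:Z)
    else 0.

Lemma PhiME (R : comRingType) (p : nat) (phi : 'I_p -> int -> R) (m n : nat) (s : int) :
  PhiM phi m n s = \matrix_(i < n, j < n) fP phi m s i j.
Proof. by apply/matrixP=> i j; rewrite !mxE. Qed.

Lemma xi_pos (R : comRingType) (p : nat) (phi : 'I_p -> int -> R) (m n : nat) (s : int) :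
  (0 < n)%N -> xi phi m (s + n%:Z) s = \det (\matrix_(i < n, j < n) fP phi m s i j).
Proof.
move=> Hn; rewrite /xi -PhiME.
have -> : (s < s + n%:Z) = true by apply/idP; lia.
by have -> : absz (s + n%:Z - s)%R = n by lia.
Qed.

Lemma xi_nonpos (R : comRingType) (p : nat) (phi : 'I_p -> int -> R) (m : nat) (t s : int) :
  t <= s -> xi phi m t s = if t == s - m%:Z + 1 then 1 else 0.
Proof.
move=> H; rewrite /xi.
by have -> : (s < t) = false by apply/negbTE; rewrite -leNgt.
Qed.

Lemma phiE_big (R : comRingType) (p : nat) (phi : 'I_p -> int -> R) (l : nat) (t : int) :
  (p <= l)%N -> phiE phi l.+1 t = 0.
Proof.
move=> H; rewrite /phiE insubN //; by rewrite -leqNgt.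
Qed.

Lemma key (R : comRingType) (p : nat) (phi : 'I_p -> int -> R) (s : int) (m n0 : nat) :
  xi phi m.+1 (s + n0.+1%:Z) s =
  \sum_(l < p) phiE phi l.+1 (s + n0.+1%:Z) * xi phi m.+1 (s + n0.+1%:Z - l.+1%:Z) s.
Proof.
set c := s + n0.+1%:Z.
rewrite xi_pos // hess_det; last first.
- move=> i j Hi Hj Hij; rewrite /fP.
  have -> : (j == 0%N) = false by apply/negbTE; lia.
  have -> : (j == i.+1) = false by apply/negbTE; lia.
  have -> : (j <= i)%N = false by apply/negbTE; lia.
  by [].
- by move=> i Hi; rewrite /fP /= eqxx.
rewrite big_ord_recl det_mx00 mulr1.
have -> : fP phi m.+1 s n0 (@ord0 n0) = phiE phi (m.+1 + n0) c by [].
have E : forall j : 'I_n0, fP phi m.+1 s n0 (lift ord0 j) *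
     \det (\matrix_(i < lift ord0 j, k < lift ord0 j) fP phi m.+1 s i k)
   = phiE phi (n0 - j.+1).+1 c * xi phi m.+1 (s + j.+1%:Z) s.
  move=> j; rewrite xi_pos // /fP /=.
  have -> : (j.+1 == n0.+1) = false by apply/negbTE; have := ltn_ord j; lia.
  by rewrite ltn_ord.
rewrite (eq_bigr _ (fun j _ => E j)) {E}.
pose N := (p + n0 + m.+1)%N.
pose F := fun l : nat => phiE phi l.+1 c * xi phi m.+1 (c - l.+1%:Z) s.
rewrite -(big_mkord xpredT F).
have W : \sum_(0 <= i < p) F i = \sum_(0 <= i < N) F i.
  rewrite (@big_cat_nat _ _ _ p 0 N) //=; last by rewrite /N; lia.
  rewrite [X in _ = _ + X]big_nat_cond [X in _ = _ + X]big1 ?addr0 // => l /andP[/andP[Hl _] _].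
  by rewrite /F phiE_big ?mul0r.
rewrite W (@big_cat_nat _ _ _ n0 0 N) //=; last by rewrite /N; lia.
rewrite (@big_cat_nat _ _ _ (n0 + m) n0 N) //=; [|by rewrite leq_addr|by rewrite /N; lia].
rewrite [X in _ + (X + _)]big_nat_cond [X in _ + (X + _)]big1 ?add0r; last first.
  move=> l /andP[/andP[H1 H2] _]; rewrite /F xi_nonpos; last by rewrite /c; lia.
  have -> : (c - l.+1%:Z == s - m.+1%:Z + 1) = false by apply/negbTE; rewrite /c; lia.
  by rewrite mulr0.
rewrite (@big_ltn _ _ _ (n0 + m) N); last by rewrite /N; lia.
rewrite [X in _ + (_ + X)]big_nat_cond [X in _ + (_ + X)]big1 ?addr0; last first.
  move=> l /andP[/andP[H1 H2] _]; rewrite /F xi_nonpos; last by rewrite /c; lia.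
  have -> : (c - l.+1%:Z == s - m.+1%:Z + 1) = false by apply/negbTE; rewrite /c; lia.
  by rewrite mulr0.
rewrite addrC; congr (_ + _).
  rewrite /F xi_nonpos; last by rewrite /c; lia.
  have -> : (c - (n0 + m).+1%:Z == s - m.+1%:Z + 1) = true by apply/eqP; rewrite /c; lia.
  by rewrite mulr1 addnC.
rewrite big_nat_rev /= big_mkord; apply: eq_bigr => j _; rewrite /F add0n.
congr (_ * _); congr (xi _ _ _ _); rewrite /c; have := ltn_ord j; lia.
Qed.

Lemma mainn (R : comRingType) (p : nat) (phi : 'I_p -> int -> R) (s : int) (n : nat) :
  Fprod phi s n = \matrix_(i < p, m < p) xi phi m.+1 (s + n%:Z - i%:Z) s.
Proof.
elim: n => [|n IH].
  apply/matrixP=> i m; rewrite !mxE /= xi_nonpos; last by lia.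
  case: (eqVneq i m) => [->|H].
    by have -> : (s + 0%:Z - m%:Z == s - m.+1%:Z + 1) = true by apply/eqP; lia.
  have -> : (s + 0%:Z - i%:Z == s - m.+1%:Z + 1) = false.
    apply/negbTE; apply/negP => /eqP E; move/negP: H; apply; apply/eqP; apply/val_inj => /=; lia.
  by [].
rewrite /= IH; apply/matrixP=> i m; rewrite !mxE.
case: i => [[|i] Hi] /=.
  rewrite subr0 key; apply: eq_bigr => k _; rewrite !mxE /=; congr (_ * xi _ _ _ _); lia.
rewrite (bigD1 (Ordinal (ltn_trans (ltnSn i) Hi))) //= big1 ?addr0.
  rewrite !mxE /= eqxx mul1r; congr (xi _ _ _ _); lia.
move=> k /negbTE Hk; rewrite !mxE /=.
have -> : (i.+1 == k.+1) = false.
  apply/negbTE; move: Hk => /negbT; apply: contra => /eqP [E].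
  by apply/eqP/val_inj => /=; rewrite E.
by rewrite mul0r.
Qed.

Theorem corollary2 (R : comRingType) (p : nat) (hp : (1 <= p)%N)
    (phi : 'I_p -> int -> R) (t s : int) (hts : s < t) :
  Fprod phi s `|t - s|%N =
  \matrix_(i < p, m < p) xi phi m.+1 (t - i%:Z) s.
Proof.
rewrite mainn; apply/matrixP=> i m; rewrite !mxE; congr (xi _ _ _ _); lia.
Qed.
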